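(* Let $H_1$ and $H_2$ be atomic hypergraphs with $\mathcal A(H_1)$ and $\mathcal A(H_2)$ of ranks $r_1$ and $r_2$, and let $k$ be an integer with $-1\le k\le \min(r_1,r_2)-1$. If the set of faces of rank $k$ of $\mathcal A(H_1)$ equals the set of faces of rank $k$ of $\mathcal A(H_2)$, then $\mathcal A(H_1)=\mathcal A(H_2)$.
   Context: A hypergraph is a finite set $H$ of nonempty subsets of some finite set; its carrier is $\bigcup H$. For a family $F$ and set $Y$, $F_Y=\{X\in F\mid X\subseteq Y\}$. A hypergraph partition of $H$ is a partition $\{H_1,\dots,H_n\}$ ($n\ge0$) of the set $H$ with $\{\bigcup H_1,\dots,\bigcup H_n\}$ a partition of $\bigcup H$; $H$ is connected if it has exactly one hypergraph partition; the finest hypergraph partition is the unique one whose blocks are connected; the sets $\bigcup H_i$ for its blocks are the connected components of the carrier, and their number $n$ is the connectedness number. $H$ is atomic if $\{x\}\in H$ for all $x\in\bigcup H$. Constructions of an atomic $H$, by induction on $|\bigcup H|$: (0) $\emptyset$ is the only construction of $\emptyset$; (1) if $|\bigcup H|\ge1$, $H$ connected, $x\in\bigcup H$, $K$ a construction of $H_{\bigcup H\setminus\{x\}}$, then $K\cup\{\bigcup H\}$ is a construction of $H$; (2) if $H$ is not connected with finest hypergraph partition $\{H_1,\dots,H_n\}$, $n\ge2$, and $K_i$ is a construction of $H_i$, then $K_1\cup\dots\cup K_n$ is a construction of $H$. A construct of $H$ is a subset of a construction of $H$ containing every connected component of $\bigcup H$. $H$ is saturated if $X_1,X_2\in H$,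 $X_1\cap X_2\ne\emptyset$ imply $X_1\cup X_2\in H$. $Y\subseteq\bigcup H$ is dispensable in $H$ if $H_Y\setminus\{Y\}$ is a connected hypergraph with carrier $Y$; hypergraphs on the same carrier are cognate if related by the equivalence relation generated by $H\sim H\cup\{Y\}$ for $Y$ dispensable in $H$; the saturated closure $\bar H$ is the unique saturated hypergraph cognate to $H$. The poset $\mathcal A(H)$ has as elements all constructs of $H$ together with $\bar H^*=\bar H\cup\{*\}$ ($*$ a fixed new element not in any carrier), ordered by $C_1\le C_2$ iff $C_2\subseteq C_1$. Its rank is $r=|\bigcup H|-n$; for $0\le k\le r$ the faces of rank $k$ are the constructs of cardinality $|\bigcup H|-k$, and $\bar H^*$ is the unique face of rank $-1$. *)

(* Defs.v *)
From HB Require Import structures.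
From Stdlib Require Import Relations.
From mathcomp Require Import all_boot all_order all_algebra.
Set Implicit Arguments. Unset Strict Implicit. Unset Printing Implicit Defensive.
Import Order.TTheory GRing.Theory Num.Theory.

Section Hyp.
Variable T : finType.
Implicit Types (H G B : {set {set T}}) (X Y : {set T}).

Definition hypergraph H : bool := set0 \notin H.

Definition carrier H : {set T} := \bigcup_(X in H) X.

Definition restrict H Y : {set {set T}} := [set X in H | X \subset Y].

Definition hpartition H (P : {set {set {set T}}}) : bool :=
  partition P H &&
  [forall B1 in P, forall B2 in P,
     (B1 != B2) ==> [disjoint carrier B1 & carrier B2]].

Definition connected H : bool :=
  #|[set P : {set {set {set T}}} | hpartition H P]| == 1.

Definition finest H (P : {set {set {set T}}}) : bool :=
  hpartition H P && [forall B in P, connected B].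

Definition conn_number H : nat :=
  if [pick P | finest H P] is Some P then #|P| else 0.

Definition atomic H : Prop := forall x, x \in carrier H -> [set x] \in H.

Inductive construction : {set {set T}} -> {set {set T}} -> Prop :=
| construction0 : construction set0 set0
| construction1 H x K :
    connected H -> x \in carrier H ->
    construction (restrict H (carrier H :\ x)) K ->
    construction H (carrier H |: K)
| construction2 H (P : {set {set {set T}}}) (f : {set {set T}} -> {set {set T}}) :
    ~~ connected H -> finest H P -> 1 < #|P| ->
    (forall B, B \in P -> construction B (f B)) ->
    construction H (\bigcup_(B in P) f B).

(* construct: subset of a construction containing every connected component
   (= carrier of a block of the finest hypergraph partition) *)
Definition construct H (C : {set {set T}}) : Prop :=
  (exists K, construction H K /\ C \subset K) /\
  (forall P, finest H P -> forall B, B \in P -> carrier B \in C).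

Definition saturated H : bool :=
  [forall X1 in H, forall X2 in H,
     ~~ [disjoint X1 & X2] ==> (X1 :|: X2 \in H)].

Definition dispensable H Y : bool :=
  [&& Y \subset carrier H, connected (restrict H Y :\ Y)
    & carrier (restrict H Y :\ Y) == Y].

(* one step H ~ H u {Y}, Y dispensable (and nonempty, so that the result is
   again a hypergraph) *)
Definition cog_step H G : Prop :=
  exists Y, [/\ dispensable H Y, Y != set0 & G = Y |: H].

Definition cognate H G : Prop := clos_refl_sym_trans _ cog_step H G.

Definition sat_closure H G : Prop := saturated G /\ cognate H G.

(* Elements of A(H) are encoded as sets over option {set T}: a construct C is
   encoded as Some @: C, and barH* = barH u {*} as None |: Some @: barH
   (None plays the role of the new element * ). *)
Definition enc (C : {set {set T}}) : {set option {set T}} := Some @: C.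

Definition inA H (F : {set option {set T}}) : Prop :=
  (exists C, construct H C /\ F = enc C) \/
  (exists G, sat_closure H G /\ F = None |: enc G).

Definition rankA H : int := (#|carrier H|%:Z - (conn_number H)%:Z)%R.

Definition face_of_rank H (k : int) (F : {set option {set T}}) : Prop :=
  (k = (-1)%R /\ exists G, sat_closure H G /\ F = None |: enc G) \/
  [/\ (0 <= k)%R, (k <= rankA H)%R &
      exists C, [/\ construct H C, (#|C|%:Z = #|carrier H|%:Z - k)%R
                  & F = enc C]].

End Hyp.

(* Main.v *)
Require Import Defs.
From HB Require Import structures.
From Stdlib Require Import Relations ClassicalEpsilon.
From mathcomp Require Import all_boot all_order all_algebra.
Set Implicit Arguments. Unset Strict Implicit. Unset Printing Implicit Defensive.
Import Order.TTheory GRing.Theory Num.Theory.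

Section S.
Variable T : finType.
Implicit Types (H G A B K R S D : {set {set T}}) (X Y Z C : {set T}).

Lemma carrierP H x : reflect (exists2 X, X \in H & x \in X) (x \in carrier H).
Proof. exact: bigcupP. Qed.

Lemma sub_carrier H X : X \in H -> X \subset carrier H.
Proof. by move=> XH; apply: bigcup_sup. Qed.

Lemma carrierS A B : A \subset B -> carrier A \subset carrier B.
Proof.
move=> sAB; apply/bigcupsP => X XA; apply: sub_carrier; exact: (subsetP sAB).
Qed.

Lemma carrier0 : carrier (set0 : {set {set T}}) = set0.
Proof. by rewrite /carrier big_set0. Qed.

Lemma carrier1 X : carrier [set X] = X.
Proof. by rewrite /carrier big_set1. Qed.

Lemma carrierU1 X A : carrier (X |: A) = X :|: carrier A.
Proof. by rewrite /carrier bigcup_setU big_set1. Qed.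

Lemma in_restrict H Y X : (X \in restrict H Y) = (X \in H) && (X \subset Y).
Proof. by rewrite inE. Qed.

Lemma restrict_sub H Y : restrict H Y \subset H.
Proof. by apply/subsetP => X; rewrite in_restrict => /andP[]. Qed.

Lemma carrier_restrict H Y : carrier (restrict H Y) \subset Y.
Proof. by apply/bigcupsP => X; rewrite in_restrict => /andP[]. Qed.

Lemma restrict_restrict H Y Z : Z \subset Y -> restrict (restrict H Y) Z = restrict H Z.
Proof.
move=> sZY; apply/setP => X; rewrite !in_restrict -andbA.
by case sXZ: (X \subset Z); rewrite ?andbF // (subset_trans sXZ sZY).
Qed.

Lemma restrict_carrier H : restrict H (carrier H) = H.
Proof.
apply/setP => X; rewrite in_restrict; case XH: (X \in H) => //=.
exact: sub_carrier.
Qed.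

Lemma hyp_sub H A : hypergraph H -> A \subset H -> hypergraph A.
Proof. by move=> hH sAH; apply: contra hH; apply: (subsetP sAH). Qed.

Lemma hyp_ne H X : hypergraph H -> X \in H -> X != set0.
Proof. by move=> hH XH; apply: contraNneq hH => <-. Qed.

Lemma carrier_eq0 A : hypergraph A -> (carrier A == set0) = (A == set0).
Proof.
move=> hA; apply/eqP/eqP => [|->]; last exact: carrier0.
move=> cA; apply/setP => X; rewrite inE; apply/negbTE/negP => XA.
have := sub_carrier XA; rewrite cA subset0 => /eqP X0.
by move: (hyp_ne hA XA); rewrite X0 eqxx.
Qed.


Definition splitfree H := forall A, A \subset H ->
  [disjoint carrier A & carrier (H :\: A)] -> A = set0 \/ A = H.

Lemma hpart_disj H P B : hpartition H P -> B \in P ->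
  [disjoint carrier B & carrier (H :\: B)].
Proof.
case/andP => /and3P[/eqP covP _ _] /forallP dP BP.
rewrite -setI_eq0; apply/eqP/setP => x; rewrite inE [RHS]inE.
apply/negbTE/andP => -[/carrierP[X XB xX] /carrierP[X' /setDP[X'H X'nB] xX']].
move: X'H; rewrite -covP => /bigcupP[B' B'P X'B'].
have /implyP/(_ BP)/forallP/(_ B')/implyP/(_ B'P) := dP B.
have -> : B != B' by apply: contraNneq X'nB => ->.
move=> /= /disjointFr h.
have : x \in carrier B by apply/carrierP; exists X.
move=> /h; have -> // : x \in carrier B' by apply/carrierP; exists X'.
Qed.

Lemma disjD (U V : {set {set T}}) : [disjoint U :\: V & V].
Proof. by have := subsetD (U :\: V) U V; rewrite subxx subsetDl => /esym. Qed.

Lemma hpart_set1 H : H != set0 -> hpartition H [set H].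
Proof.
move=> H0; apply/andP; split.
  by rewrite /partition cover1 eqxx trivIset1 inE eq_sym H0.
apply/forallP => B1; apply/implyP; rewrite inE => /eqP->.
by apply/forallP => B2; apply/implyP; rewrite inE => /eqP->; rewrite eqxx.
Qed.

Lemma hpart_set2 H A : A \subset H -> A != set0 -> A != H ->
  [disjoint carrier A & carrier (H :\: A)] -> hpartition H [set A; H :\: A].
Proof.
move=> sAH A0 AH dA.
have DA0 : H :\: A != set0.
  apply: contraNneq AH => /eqP; rewrite setD_eq0 => sHA.
  by rewrite eqEsubset sAH.
have neq : A != H :\: A.
  apply: contraNneq A0 => eA; apply/eqP/setP => X; rewrite inE.
  apply/negbTE/negP => XA; have : X \in H :\: A by rewrite -eA.
  by move=> /setDP[_]; rewrite XA.
apply/andP; split.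
  rewrite /partition; apply/and3P; split.
  - rewrite /cover bigcup_setU !big_set1.
    by rewrite -[X in _ == X](setID H A) (setIidPr sAH).
  - apply/trivIsetP => B1 B2; rewrite !inE => /orP[]/eqP-> /orP[]/eqP->;
      rewrite ?eqxx // => _.
    + by rewrite disjoint_sym disjD.
    + exact: disjD.
  - by rewrite !inE negb_or ![set0 == _]eq_sym A0.
apply/forallP => B1; apply/implyP; rewrite !inE => /orP[]/eqP->;
apply/forallP => B2; apply/implyP; rewrite !inE => /orP[]/eqP->;
rewrite ?eqxx ?dA ?implybT //; by rewrite disjoint_sym dA implybT.
Qed.


Lemma connectedP H : reflect (splitfree H) (connected H).
Proof.
apply: (iffP idP).
  move=> /cards1P[P0 eP] A sAH dA.
  case: (eqVneq A set0) => [->|A0]; first by left.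
  case: (eqVneq A H) => [->|AH]; first by right.
  have H0 : H != set0 by apply: contraNneq A0 => H0; rewrite -subset0 -H0.
  have h1 : [set H] \in [set P | hpartition H P] by rewrite inE hpart_set1.
  have h2 : [set A; H :\: A] \in [set P | hpartition H P] by rewrite inE hpart_set2.
  move: h1 h2; rewrite eP !inE => /eqP e1 /eqP e.
  have : A \in [set A; H :\: A] by rewrite !inE eqxx.
  by rewrite e -e1 inE => /eqP AH'; rewrite AH' eqxx in AH.
move=> sf; apply/cards1P.
case: (eqVneq H set0) => [->|H0].
  exists set0; apply/setP => P; rewrite !inE /hpartition partition_set0.
  case: (eqVneq P set0) => [->|] //=.
  by apply/forallP => B; rewrite inE.
exists [set H]; apply/setP => P; rewrite !inE.
apply/idP/eqP => [hP|->]; last exact: hpart_set1.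
have allH : forall B, B \in P -> B = H.
  move=> B BP; have pP : partition P H by case/andP: hP.
  case: (sf B (partitionS pP BP) (hpart_disj hP BP)) => // B0.
  by move: (partition_neq0 pP BP); rewrite B0 eqxx.
have : P != set0.
  apply: contraNneq H0 => P0; case/andP: hP => /and3P[/eqP <- _ _] _.
  by rewrite P0 /cover big_set0.
case/set0Pn => B BP; apply/eqP; rewrite eqEsubset; apply/andP; split.
  by apply/subsetP => B' B'P; rewrite inE (allH _ B'P).
by apply/subsetP => B'; rewrite inE => /eqP->; rewrite -(allH _ BP).
Qed.

Lemma conn_side S U V : connected S -> S \subset U :|: V ->
  [disjoint carrier U & carrier V] -> S \subset U \/ S \subset V.
Proof.
move=> /connectedP sf sS dUV.
have sA : S :&: U \subset S by apply: subsetIl.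
have dA : [disjoint carrier (S :&: U) & carrier (S :\: (S :&: U))].
  apply: disjointW dUV; first by apply: carrierS; apply: subsetIr.
  apply: carrierS; apply/subsetP => X /setDP[XS]; rewrite inE XS /= => XU.
  by move: (subsetP sS X XS); rewrite inE (negbTE XU).
case: (sf _ sA dA) => [e|e].
  right; apply/subsetP => X XS; move: (subsetP sS X XS); rewrite inE.
  case/orP => // XU; have : X \in S :&: U by rewrite inE XS.
  by rewrite e inE.
by left; rewrite -e subsetIr.
Qed.


Lemma disj_sub0 (U V : {set T}) : [disjoint U & V] -> U \subset V -> U = set0.
Proof.
move=> dUV sUV; apply/eqP; rewrite -subset0; apply/subsetP => x xU.
by have := subsetP sUV x xU; rewrite (disjointFr dUV xU).
Qed.

Lemma conn_top A X : hypergraph A -> X \in A -> carrier A \subset X -> connected A.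
Proof.
move=> hA XA sAX; apply/connectedP => B sBA dB.
have hB : hypergraph B by apply: hyp_sub sBA.
have hD : hypergraph (A :\: B) by apply: hyp_sub (subsetDl A B).
case XB: (X \in B).
  right; have : carrier (A :\: B) = set0.
    apply: (disj_sub0 (V := carrier B)); first by rewrite disjoint_sym.
    apply: subset_trans (sub_carrier XB).
    by apply: subset_trans sAX; apply: carrierS; apply: subsetDl.
  move/eqP; rewrite carrier_eq0 // setD_eq0 => sAB.
  by apply/eqP; rewrite eqEsubset sBA.
left; apply/eqP; rewrite -carrier_eq0 //; apply/eqP.
apply: (disj_sub0 dB); apply: subset_trans (@sub_carrier (A :\: B) X _).
  by apply: subset_trans sAX; apply: carrierS.
by rewrite inE XB.
Qed.

Definition Conn H := [set Z : {set T} |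
  [&& Z != set0, connected (restrict H Z) & carrier (restrict H Z) == Z]].

Lemma ConnP H Z : reflect [/\ Z != set0, connected (restrict H Z) & carrier (restrict H Z) = Z]
  (Z \in Conn H).
Proof. by rewrite inE; apply: (iffP and3P) => -[a b /eqP c]. Qed.

Lemma Conn_ne H Z : Z \in Conn H -> Z != set0.
Proof. by case/ConnP. Qed.

Lemma Conn_sub H Z : Z \in Conn H -> Z \subset carrier H.
Proof. by case/ConnP => _ _ <-; apply: carrierS; apply: restrict_sub. Qed.

Lemma hyp_Conn H : hypergraph (Conn H).
Proof. by apply/negP => /Conn_ne; rewrite eqxx. Qed.

Lemma H_sub_Conn H : hypergraph H -> H \subset Conn H.
Proof.
move=> hH; apply/subsetP => X XH.
have XR : X \in restrict H X by rewrite in_restrict XH subxx.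
have eC : carrier (restrict H X) = X.
  by apply/eqP; rewrite eqEsubset carrier_restrict sub_carrier.
apply/ConnP; split => //; first exact: hyp_ne XH.
apply: conn_top XR _; first by apply: hyp_sub (restrict_sub H X).
by rewrite eC.
Qed.

Lemma Conn_restrict H Y : Conn (restrict H Y) = [set Z in Conn H | Z \subset Y].
Proof.
apply/setP => Z; rewrite [RHS]inE.
case sZY: (Z \subset Y); last first.
  rewrite andbF; apply/negbTE/negP => hZ.
  by have := subset_trans (Conn_sub hZ) (carrier_restrict H Y); rewrite sZY.
by rewrite andbT !inE restrict_restrict.
Qed.

Lemma carrier_Conn H : hypergraph H -> carrier (Conn H) = carrier H.
Proof.
move=> hH; apply/eqP; rewrite eqEsubset (carrierS (H_sub_Conn hH)) andbT.
by apply/bigcupsP => Z hZ; apply: Conn_sub hZ.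
Qed.

Lemma conn_Conn H : hypergraph H ->
  connected H = (H == set0) || (carrier H \in Conn H).
Proof.
move=> hH; case: (eqVneq H set0) => [->|H0] /=.
  by apply/connectedP => A; rewrite subset0 => /eqP ->; left.
rewrite inE restrict_carrier eqxx andbT -[carrier H == set0]negbK carrier_eq0 //.
by rewrite H0.
Qed.

Lemma Conn_eq0 H : hypergraph H -> (Conn H == set0) = (H == set0).
Proof.
move=> hH; rewrite -carrier_eq0 // -carrier_Conn // carrier_eq0 //.
exact: hyp_Conn.
Qed.

Lemma union_conn K S1 S2 : hypergraph K -> S1 \subset K -> S2 \subset K ->
  connected S1 -> connected S2 -> ~~ [disjoint carrier S1 & carrier S2] ->
  carrier K \subset carrier S1 :|: carrier S2 -> connected K.
Proof.
move=> hK s1 s2 c1 c2 d12 sK; apply/connectedP => A sAK dA.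
have sK' : forall S, S \subset K -> S \subset A :|: (K :\: A).
  move=> S sS; apply: subset_trans sS _; apply/subsetP => X XK.
  by rewrite !inE XK; case: (X \in A).
have hD : hypergraph (K :\: A) by apply: hyp_sub (subsetDl K A).
have hA : hypergraph A by apply: hyp_sub sAK.
have cross : forall U V : {set {set T}}, S1 \subset U -> S2 \subset V ->
    [disjoint carrier U & carrier V] -> False.
  move=> U V sU sV dUV; move/negP: d12; apply.
  by apply: disjointW dUV; apply: carrierS.
case: (conn_side c1 (sK' _ s1) dA) => h1; case: (conn_side c2 (sK' _ s2) dA) => h2.
- right; have : carrier (K :\: A) = set0.
    apply: (disj_sub0 (V := carrier A)); first by rewrite disjoint_sym.
    apply: subset_trans (carrierS (subsetDl K A)) _; apply: subset_trans sK _.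
    by rewrite subUset !carrierS.
  move/eqP; rewrite carrier_eq0 // setD_eq0 => sKA.
  by apply/eqP; rewrite eqEsubset sAK.
- by case: (cross _ _ h1 h2 dA).
- by case: (cross _ _ h1 h2); rewrite disjoint_sym.
- left; apply/eqP; rewrite -carrier_eq0 //; apply/eqP.
  apply: (disj_sub0 dA); apply: subset_trans (carrierS sAK) _.
  apply: subset_trans sK _; by rewrite subUset !carrierS.
Qed.

Lemma Conn_union H X1 X2 : hypergraph H -> X1 \in Conn H -> X2 \in Conn H ->
  ~~ [disjoint X1 & X2] -> X1 :|: X2 \in Conn H.
Proof.
move=> hH /ConnP[n1 c1 e1] /ConnP[n2 c2 e2] d.
have sub : forall X, X \subset X1 :|: X2 -> restrict H X \subset restrict H (X1 :|: X2).
  move=> X sX; apply/subsetP => W; rewrite !in_restrict => /andP[-> /subset_trans]; exact.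
have hK := hyp_sub hH (restrict_sub H (X1 :|: X2)).
apply/ConnP; split.
- by apply: contraNneq n1 => e; rewrite -subset0 -e subsetUl.
- apply: (union_conn hK (sub _ (subsetUl _ _)) (sub _ (subsetUr _ _))) => //.
    by rewrite e1 e2.
  by rewrite e1 e2 carrier_restrict.
- apply/eqP; rewrite eqEsubset carrier_restrict /=.
  by rewrite -{1}e1 -{1}e2 subUset !carrierS // sub // ?subsetUl ?subsetUr.
Qed.


Definition comps H := [set C in Conn H | [forall Z in Conn H, (C \subset Z) ==> (Z == C)]].

Lemma compsP H C : reflect (C \in Conn H /\ forall Z, Z \in Conn H -> C \subset Z -> Z = C)
  (C \in comps H).
Proof.
rewrite [C \in comps H]in_set; apply: (iffP andP) => -[CC h]; split => //.
  by move=> Z ZC sCZ; move/forallP/(_ Z): h; rewrite ZC sCZ /= => /eqP.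
by apply/forallP => Z; apply/implyP => ZC; apply/implyP => sCZ; rewrite (h Z ZC sCZ).
Qed.

Lemma comps_max H Z : Z \in Conn H -> exists2 C, C \in comps H & Z \subset C.
Proof.
move=> ZC; pose S := [set W in Conn H | Z \subset W].
have ZS : Z \in S by rewrite inE ZC subxx.
case: (@arg_maxnP _ Z (fun W => W \in S) (fun W => #|W|) ZS) => C.
rewrite inE => /andP[CC sZC] maxC; exists C => //.
apply/compsP; split => // W WC sCW.
have WS : W \in S by rewrite inE WC (subset_trans sZC sCW).
have := maxC W WS => leW; apply/eqP; rewrite eq_sym eqEcard sCW /=; exact: leW.
Qed.

Lemma comps_disj H C1 C2 : hypergraph H -> C1 \in comps H -> C2 \in comps H ->
  C1 != C2 -> [disjoint C1 & C2].
Proof.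
move=> hH /compsP[c1 m1] /compsP[c2 m2] ne; apply/negPn/negP => d.
have U := Conn_union hH c1 c2 d.
have e1 := m1 _ U (subsetUl _ _); have e2 := m2 _ U (subsetUr _ _).
by rewrite -e1 e2 eqxx in ne.
Qed.

Lemma hpart_block H P B : hypergraph H -> hpartition H P -> B \in P ->
  B = restrict H (carrier B).
Proof.
move=> hH hP BP; have pP : partition P H by case/andP: hP.
apply/setP => X; rewrite in_restrict; apply/idP/idP.
  by move=> XB; rewrite (subsetP (partitionS pP BP)) ?sub_carrier.
case/andP => XH sXB; move: (XH); rewrite -(cover_partition pP) => /bigcupP[B' B'P XB'].
case: (eqVneq B B') => [-> //|ne].
case/andP: hP => _ /forallP/(_ B)/implyP/(_ BP)/forallP/(_ B')/implyP/(_ B'P).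
rewrite ne /= => d.
have X0 : X = set0.
  apply/eqP; rewrite -subset0; apply/subsetP => x xX.
  have := subsetP sXB x xX; rewrite (disjointFl d) //.
  exact: (subsetP (sub_carrier XB')).
by move: (hyp_ne hH XH); rewrite X0 eqxx.
Qed.


Lemma block_ne H P B : hypergraph H -> hpartition H P -> B \in P -> carrier B != set0.
Proof.
move=> hH hP BP; have pP : partition P H by case/andP: hP.
rewrite carrier_eq0; first exact: partition_neq0 pP BP.
exact: hyp_sub hH (partitionS pP BP).
Qed.

Lemma finest_comps H P : hypergraph H -> finest H P -> (@carrier T) @: P = comps H.
Proof.
move=> hH /andP[hP /forallP cP]; have pP : partition P H by case/andP: hP.
have inConn : forall B, B \in P -> carrier B \in Conn H.
  move=> B BP; apply/ConnP; split; first exact: block_ne hP BP.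
    by rewrite -(hpart_block hH hP BP); move/implyP: (cP B); apply.
  by rewrite -(hpart_block hH hP BP).
apply/setP => C; apply/imsetP/compsP => [[B BP ->]|[CC mC]].
  split; first exact: inConn.
  move=> Z /ConnP[Z0 cZ eZ] sBZ.
  have sR : restrict H Z \subset B :|: (H :\: B).
    apply/subsetP => X; rewrite in_restrict inE => /andP[XH _].
    by rewrite inE XH; case: (X \in B).
  case: (conn_side cZ sR (hpart_disj hP BP)).
  - move=> sRB; apply/eqP; rewrite eqEsubset sBZ andbT -{1}eZ; exact: carrierS.
  - move=> sRD; have := hpart_disj hP BP => d.
    have : carrier B = set0.
      apply: disj_sub0 d _; apply: subset_trans sBZ _; rewrite -eZ; exact: carrierS.
    by move/eqP; rewrite (negbTE (block_ne hH hP BP)).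
have hR : hypergraph (restrict H C) by apply: hyp_sub (restrict_sub H C).
case/ConnP: (CC) => C0 cR eR.
have : restrict H C != set0 by rewrite -carrier_eq0 // eR.
case/set0Pn => X XR; have XH : X \in H by move: XR; rewrite in_restrict => /andP[].
move: (XH); rewrite -(cover_partition pP) => /bigcupP[B BP XB].
have sR : restrict H C \subset B :|: (H :\: B).
  apply/subsetP => X'; rewrite in_restrict inE => /andP[X'H _].
  by rewrite inE X'H; case: (X' \in B).
case: (conn_side cR sR (hpart_disj hP BP)) => [sRB|sRD].
  exists B => //; apply/esym/mC; first exact: inConn.
  by rewrite -eR; apply: carrierS.
by move: (subsetP sRD X XR); rewrite inE XB.
Qed.

Definition Pc H := [set restrict H C | C in comps H].

Lemma carrier_restrict_Conn H C : C \in Conn H -> carrier (restrict H C) = C.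
Proof. by case/ConnP. Qed.

Lemma finest_Pc H : hypergraph H -> finest H (Pc H).
Proof.
move=> hH.
have cc : forall C, C \in comps H -> carrier (restrict H C) = C.
  by move=> C /compsP[/carrier_restrict_Conn]. 
have bdisj : forall C1 C2, C1 \in comps H -> C2 \in comps H ->
    restrict H C1 != restrict H C2 -> [disjoint carrier (restrict H C1) & carrier (restrict H C2)].
  move=> C1 C2 c1 c2 ne; rewrite !cc //; apply: (comps_disj hH c1 c2).
  by apply/eqP => e; rewrite e eqxx in ne.
apply/andP; split; [apply/andP; split|].
- apply/and3P; split.
  + apply/eqP/setP => X; apply/bigcupP/idP => [[B /imsetP[C CC ->]]|XH].
      by rewrite in_restrict => /andP[].
    have XC := subsetP (H_sub_Conn hH) X XH.
    case: (comps_max XC) => C CC sXC.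
    by exists (restrict H C); [apply: imset_f | rewrite in_restrict XH].
  + apply/trivIsetP => _ _ /imsetP[C1 c1 ->] /imsetP[C2 c2 ->] ne.
    have d := bdisj _ _ c1 c2 ne.
    rewrite -setI_eq0; apply/eqP/setP => X; rewrite inE [RHS]inE.
    apply/negbTE/andP => -[X1 X2].
    have XH : X \in H by move: X1; rewrite in_restrict => /andP[].
    have := hyp_ne hH XH; case/set0Pn => x xX.
    move: (disjointFr d (subsetP (sub_carrier X1) x xX)).
    by rewrite (subsetP (sub_carrier X2) x xX).
  + apply/imsetP => -[C CC e].
    have := cc C CC; rewrite -e carrier0 => C0.
    by case/compsP: CC => /Conn_ne; rewrite -C0 eqxx.
- apply/forallP => B1; apply/implyP => /imsetP[C1 c1 ->].
  apply/forallP => B2; apply/implyP => /imsetP[C2 c2 ->].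
  by apply/implyP; apply: bdisj.
- apply/forallP => B; apply/implyP => /imsetP[C CC ->].
  by case/compsP: CC => /ConnP[].
Qed.


Lemma finest_card H P : hypergraph H -> finest H P -> #|P| = #|comps H|.
Proof.
move=> hH fP; rewrite -(finest_comps hH fP) card_in_imset //.
case/andP: fP => hP _ B1 B2 b1 b2 e.
by rewrite (hpart_block hH hP b1) (hpart_block hH hP b2) e.
Qed.

Lemma conn_number_comps H : hypergraph H -> conn_number H = #|comps H|.
Proof.
move=> hH; rewrite /conn_number; case: pickP => [P fP|none].
  exact: finest_card.
by have := none (Pc H); rewrite finest_Pc.
Qed.


Lemma disj_ne (U V W : {set T}) : W != set0 -> W \subset U -> W \subset V -> ~~ [disjoint U & V].
Proof.
move=> W0 sU sV; apply/negP => d; case/set0Pn: W0 => x xW.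
by have := disjointFr d (subsetP sU x xW); rewrite (subsetP sV x xW).
Qed.

Lemma conn_add R Y D : hypergraph R -> Y != set0 -> D \subset R -> connected D ->
  carrier D = Y -> connected (Y |: R) = connected R.
Proof.
move=> hR Y0 sDR cD eD.
have sYR : Y \subset carrier R by rewrite -eD carrierS.
have hYR : hypergraph (Y |: R) by rewrite /hypergraph !inE negb_or eq_sym Y0.
apply/idP/idP => [cYR|cR]; last first.
  apply: (union_conn hYR (subsetUr _ _) (_ : [set Y] \subset _) cR).
  - by rewrite sub1set setU11.
  - apply: (@conn_top _ Y); rewrite ?carrier1 ?inE //.
    by rewrite /hypergraph inE eq_sym.
  - by rewrite carrier1; apply: (disj_ne Y0).
  - by rewrite carrierU1 carrier1 setUC.
apply/connectedP => A sAR dA.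
have hA : hypergraph A := hyp_sub hR sAR.
have sD : D \subset A :|: (R :\: A).
  apply: subset_trans sDR _; apply/subsetP => X XR; rewrite !inE XR.
  by case: (X \in A).
case: (conn_side cD sD dA) => [sDA|sDD].
  have sYA : Y \subset carrier A by rewrite -eD carrierS.
  have nY : Y \notin R :\: A.
    apply/negP => YD; move/negP: (disj_ne Y0 sYA (sub_carrier YD)); apply; exact: dA.
  have dU : [disjoint carrier (Y |: A) & carrier (R :\: A)].
    by rewrite carrierU1 (setUidPr sYA).
  have sU : Y |: R \subset (Y |: A) :|: (R :\: A).
    apply/subsetP => X; rewrite !inE => /orP[->//|XR]; rewrite XR.
    by case: (X \in A); rewrite ?orbT.
  case: (conn_side cYR sU dU) => [s1|s2]; last first.
    by move: (subsetP s2 Y (setU11 _ _)); rewrite (negbTE nY).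
  right; apply/eqP; rewrite eqEsubset sAR /=; apply/subsetP => X XR.
  move: (subsetP s1 X (setU1r _ XR)); rewrite !inE => /orP[/eqP XY|//].
  apply/negPn/negP => XA; move: nY; rewrite -XY inE XA XR.
  by [].
have sYD : Y \subset carrier (R :\: A) by rewrite -eD carrierS.
have nY : Y \notin A.
  apply/negP => YA; move/negP: (disj_ne Y0 (sub_carrier YA) sYD); apply; exact: dA.
have dU : [disjoint carrier A & carrier (Y |: (R :\: A))].
  by rewrite carrierU1 (setUidPr sYD).
have sU : Y |: R \subset A :|: (Y |: (R :\: A)).
  apply/subsetP => X; rewrite !inE => /orP[->|XR]; rewrite ?orbT // XR.
  by case: (X \in A); rewrite ?orbT.
case: (conn_side cYR sU dU) => [s1|s2].
  by move: (subsetP s1 Y (setU11 _ _)); rewrite (negbTE nY).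
left; apply/eqP; rewrite -subset0; apply/subsetP => X XA.
move: (subsetP s2 X (setU1r _ (subsetP sAR X XA))); rewrite !inE XA /=.
by rewrite orbF => /eqP XY; move: nY; rewrite -XY XA.
Qed.


Lemma step_hyp H G : cog_step H G -> hypergraph G = hypergraph H.
Proof.
by case=> Y [_ Y0 ->]; rewrite /hypergraph !inE negb_or eq_sym Y0.
Qed.

Lemma step_Conn H G : hypergraph H -> cog_step H G -> Conn G = Conn H.
Proof.
move=> hH [Y [/and3P[sY cD /eqP eD] Y0 ->]].
apply/setP => Z; case sYZ: (Y \subset Z).
  have e : restrict (Y |: H) Z = Y |: restrict H Z.
    apply/setP => X; rewrite in_restrict !inE.
    by case: (eqVneq X Y) => [->|] //=; rewrite sYZ.
  have sDR : restrict H Y :\ Y \subset restrict H Z.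
    apply/subsetP => X; rewrite !inE => /andP[_ /andP[XH sXY]].
    by rewrite XH (subset_trans sXY sYZ).
  have hR := hyp_sub hH (restrict_sub H Z).
  have sYc : Y \subset carrier (restrict H Z) by rewrite -eD carrierS.
  rewrite !inE e (conn_add hR Y0 sDR cD eD) carrierU1 (setUidPr sYc).
  by [].
have e : restrict (Y |: H) Z = restrict H Z.
  apply/setP => X; rewrite !in_restrict !inE.
  by case: (eqVneq X Y) => [->|] //=; rewrite sYZ andbF.
by rewrite !inE e.
Qed.

Lemma cognate_Conn H G : cognate H G ->
  (hypergraph G = hypergraph H) /\ (hypergraph H -> Conn G = Conn H).
Proof.
elim => {H G} [H G st|H|H G _ [e1 e2]|H G K _ [e1 e2] _ [e3 e4]].
- by split; [exact: step_hyp | move=> hH; exact: step_Conn].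
- by [].
- by split => // hG; rewrite e2 // -e1.
- by split; [rewrite e3 e1 | move=> hH; rewrite e4 ?e1 // e2].
Qed.

Lemma sat_Conn G : hypergraph G -> saturated G -> Conn G = G.
Proof.
move=> hG sG; apply/eqP; rewrite eqEsubset H_sub_Conn // andbT.
apply/subsetP => Y /ConnP[Y0 cR eR].
set R := restrict G Y.
have hR : hypergraph R := hyp_sub hG (restrict_sub G Y).
have : R != set0 by rewrite -carrier_eq0 // eR.
case/set0Pn => X0 X0R.
case: (@arg_maxnP _ X0 (fun X => X \in R) (fun X => #|X|) X0R) => X XR maxX.
have XG : X \in G by move: XR; rewrite in_restrict => /andP[].
have sXY : X \subset Y by move: XR; rewrite in_restrict => /andP[].
suff -> : Y = X by [].
move/connectedP: cR => sf.
have sA : restrict R X \subset R := restrict_sub R X.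
case: (boolP [disjoint carrier (restrict R X) & carrier (R :\: restrict R X)]) => d.
  case: (sf _ sA d) => e.
    have : X \in restrict R X by rewrite in_restrict XR subxx.
    by rewrite e inE.
  apply/eqP; rewrite eqEsubset sXY andbT -eR -e; exact: carrier_restrict.
exfalso; move: d; rewrite -setI_eq0 => /set0Pn[x].
rewrite inE => /andP[/carrierP[W WA xW] /carrierP[Z /setDP[ZR ZnA] xZ]].
have sWX : W \subset X by move: WA; rewrite in_restrict => /andP[].
have ZG : Z \in G by move: ZR; rewrite in_restrict => /andP[].
have sZY : Z \subset Y by move: ZR; rewrite in_restrict => /andP[].
have nZX : ~~ (Z \subset X) by move: ZnA; rewrite in_restrict ZR.
have UG : X :|: Z \in G.
  move/forallP/(_ X)/implyP/(_ XG)/forallP/(_ Z)/implyP/(_ ZG)/implyP: sG; apply.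
  by apply: (disj_ne (W := [set x])); rewrite ?sub1set ?(subsetP sWX) //; apply/set0Pn; exists x; rewrite inE.
have UR : X :|: Z \in R by rewrite in_restrict UG subUset sXY.
have le : #|X :|: Z| <= #|X| := maxX _ UR.
have /eqP e : X == X :|: Z by rewrite eqEcard subsetUl le.
by move: nZX; rewrite e subsetUr.
Qed.



Lemma Conn_sat H : hypergraph H -> saturated (Conn H).
Proof.
move=> hH; apply/forallP => X1; apply/implyP => c1; apply/forallP => X2.
apply/implyP => c2; apply/implyP => d; exact: Conn_union.
Qed.

Lemma cognate_add H : hypergraph H -> forall n S, #|S| = n -> S \subset Conn H ->
  cognate H (H :|: S).
Proof.
move=> hH; elim => [|n IH] S cS sS.
  by move/cards0_eq: cS => ->; rewrite setU0; apply: rst_refl.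
have : S != set0 by rewrite -card_gt0 cS.
case/set0Pn => Y YS.
have cS' : #|S :\ Y| = n by move: cS; rewrite (cardsD1 Y) YS => -[].
have sS' : S :\ Y \subset Conn H by apply: subset_trans sS; apply: subsetDl.
have cg := IH _ cS' sS'.
set G' := H :|: S :\ Y in cg.
have hG' : hypergraph G'.
  rewrite /hypergraph inE negb_or; apply/andP; split; first exact: hH.
  apply/negP => h; have := Conn_ne (subsetP sS' _ h).
  by rewrite eqxx.
have eC : Conn G' = Conn H by case: (cognate_Conn cg) => _ ->.
have YC : Y \in Conn G' by rewrite eC (subsetP sS).
have eS : H :|: S = Y |: G'.
  by rewrite /G' setUCA setD1K.
case YG : (Y \in G').
  by rewrite eS (setUidPr _) // sub1set.
rewrite eS; apply: rst_trans cg _; apply: rst_step.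
exists Y; split => //; last exact: Conn_ne YC.
case/ConnP: YC => _ cR eR; rewrite /dispensable.
have -> : restrict G' Y :\ Y = restrict G' Y.
  by apply/setDidPl; rewrite disjoint_sym disjoints1 in_restrict YG.
apply/and3P; split => //; last by rewrite eR.
by rewrite -eR carrierS // restrict_sub.
Qed.

Lemma sat_closureP H G : hypergraph H -> sat_closure H G <-> G = Conn H.
Proof.
move=> hH; split.
  case=> sG cg; case: (cognate_Conn cg) => hG eC.
  by rewrite -eC // sat_Conn // hG.
move=> ->; split; first exact: Conn_sat.
have := @cognate_add H hH _ (Conn H) erefl (subxx _).
by rewrite (setUidPr (H_sub_Conn hH)).
Qed.


Lemma conn_nonempty_Conn H : hypergraph H -> connected H -> H != set0 ->
  carrier H \in Conn H.
Proof. by move=> hH; rewrite conn_Conn // => /orP[->|]. Qed.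

Lemma constr_Conn H K : construction H K -> hypergraph H -> K \subset Conn H.
Proof.
elim => {H K} [|H x K cH xH _ IH|H P f ncH fP _ _ IH] hH.
- by rewrite sub0set.
- rewrite subUset sub1set; apply/andP; split.
    apply: conn_nonempty_Conn => //; apply/set0Pn.
    by case/carrierP: xH => X XH _; exists X.
  apply: subset_trans (IH (hyp_sub hH (restrict_sub _ _))) _.
  by rewrite Conn_restrict; apply/subsetP => Z; rewrite inE => /andP[].
- have hP : hpartition H P by case/andP: fP.
  have pP : partition P H by case/andP: hP.
  apply/bigcupsP => B BP.
  have hB := hyp_sub hH (partitionS pP BP).
  apply: subset_trans (IH B BP hB) _.
  rewrite (hpart_block hH hP BP) Conn_restrict.
  by apply/subsetP => Z; rewrite inE => /andP[].
Qed.

Lemma comps_Conn H1 H2 : Conn H1 = Conn H2 -> comps H1 = comps H2.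
Proof. by rewrite /comps => ->. Qed.

Lemma comps_restrict H P C : hypergraph H -> finest H P -> C \in comps H ->
  restrict H C \in P.
Proof.
move=> hH fP; rewrite -(finest_comps hH fP) => /imsetP[B BP ->].
case/andP: fP => hP _; by rewrite -(hpart_block hH hP BP).
Qed.

Lemma constr_transfer H1 K : construction H1 K -> forall H2, hypergraph H1 -> hypergraph H2 ->
  Conn H1 = Conn H2 -> construction H2 K.
Proof.
elim => {H1 K} [|H x K cH xH _ IH|H P f ncH fP gP _ IH] H2 h1 h2 eC.
- have : Conn H2 == set0 by rewrite -eC Conn_eq0.
  rewrite Conn_eq0 // => /eqP ->; exact: construction0.
- have ec : carrier H = carrier H2 by rewrite -(carrier_Conn h1) -(carrier_Conn h2) eC.
  rewrite ec; apply: (construction1 (x := x)); last first.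
  + apply: IH; first exact: hyp_sub h1 (restrict_sub _ _).
      exact: hyp_sub h2 (restrict_sub _ _).
    by rewrite !Conn_restrict eC ec.
  + by rewrite -ec.
  + rewrite conn_Conn // -eC -ec conn_nonempty_Conn ?orbT //.
    by apply/set0Pn; case/carrierP: xH => X XH _; exists X.
- have hP : hpartition H P by case/andP: fP.
  have ecomps := comps_Conn eC.
  have ec : carrier H = carrier H2 by rewrite -(carrier_Conn h1) -(carrier_Conn h2) eC.
  have nc2 : ~~ connected H2.
    rewrite conn_Conn // negb_or; move: ncH; rewrite conn_Conn // negb_or => /andP[n1 n2].
    by rewrite -Conn_eq0 // -eC Conn_eq0 // n1 -ec.
  have fP2 := finest_Pc h2.
  have e : \bigcup_(B in P) f B = \bigcup_(B in Pc H2) f (restrict H (carrier B)).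
    apply/setP => X; apply/bigcupP/bigcupP => [[B BP XB]|[B BP XB]].
      have cB : carrier B \in comps H by rewrite -(finest_comps h1 fP) imset_f.
      exists (restrict H2 (carrier B)).
        by apply: (comps_restrict h2 fP2); rewrite -ecomps.
      rewrite carrier_restrict_Conn; last by rewrite -eC; case/compsP: cB.
      by rewrite -(hpart_block h1 hP BP).
    exists (restrict H (carrier B)) => //; apply: (comps_restrict h1 fP).
    by rewrite ecomps -(finest_comps h2 fP2) imset_f.
  rewrite e; apply: (construction2 nc2 fP2).
    by rewrite (finest_card h2 fP2) -ecomps -(finest_card h1 fP).
  move=> B BP.
  have cB : carrier B \in comps H by rewrite ecomps -(finest_comps h2 fP2) imset_f.
  have BP1 := comps_restrict h1 fP cB.
  have pP : partition P H by case/andP: hP.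
  case/andP: fP2 => hP2 _; have pP2 : partition (Pc H2) H2 by case/andP: hP2.
  apply: IH => //.
  + exact: hyp_sub h1 (partitionS pP BP1).
  + exact: hyp_sub h2 (partitionS pP2 BP).
  + by rewrite {2}(hpart_block h2 hP2 BP) !Conn_restrict eC.
Qed.


Lemma card_bigcup (I U : finType) (J : {set I}) (F : I -> {set U}) :
  {in J &, forall i j, i != j -> [disjoint F i & F j]} ->
  {in J, forall i, F i != set0} ->
  #|\bigcup_(i in J) F i| = \sum_(i in J) #|F i|.
Proof.
move=> dF nF; rewrite -cover_imset.
have [tI inj] : trivIset (F @: J) /\ {in J &, injective F}.
  apply: trivIimset.
    by move=> i j iJ jJ ne; apply: dF => //; rewrite eq_sym.
  by apply/imsetP => -[i iJ e]; move: (nF i iJ); rewrite -e eqxx.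
move/eqP: tI => <-; exact: big_imset.
Qed.

Lemma carrier_cover H P : partition P H -> carrier H = \bigcup_(B in P) carrier B.
Proof.
move=> pP; rewrite -(cover_partition pP); apply/setP => x.
apply/carrierP/bigcupP => [[X /bigcupP[B BP XB] xX]|[B BP /carrierP[X XB xX]]].
  by exists B => //; apply/carrierP; exists X.
by exists X => //; apply/bigcupP; exists B.
Qed.

Lemma atomic_restrict H Y : atomic H -> atomic (restrict H Y).
Proof.
move=> aH x /carrierP[X XR xX]; move: XR; rewrite !in_restrict => /andP[XH sXY].
rewrite aH ?sub1set ?(subsetP sXY) //.
by apply/carrierP; exists X.
Qed.

Lemma comps_conn H : hypergraph H -> connected H -> H != set0 ->
  comps H = [set carrier H].
Proof.
move=> hH cH H0; have cC := conn_nonempty_Conn hH cH H0.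
apply/setP => C; rewrite inE; apply/compsP/eqP => [[CC mC]|->].
  by apply/esym/mC => //; apply: Conn_sub.
by split => // Z ZC sZ; apply/eqP; rewrite eqEsubset sZ Conn_sub.
Qed.

Lemma constr_comps H K : construction H K -> hypergraph H -> comps H \subset K.
Proof.
elim => {H K} [|H x K cH xH _ IH|H P f ncH fP _ _ IH] hH.
- have h0 : hypergraph (set0 : {set {set T}}) by rewrite /hypergraph inE.
  have : Conn (set0 : {set {set T}}) == set0 by rewrite Conn_eq0.
  move/eqP => e; apply/subsetP => C; rewrite [C \in comps _]inE e inE //.
- rewrite comps_conn //; first by rewrite sub1set setU11.
  by apply/set0Pn; case/carrierP: xH => X XH _; exists X.
- have hP : hpartition H P by case/andP: fP.
  have pP : partition P H by case/andP: hP.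
  apply/subsetP => C; rewrite -(finest_comps hH fP) => /imsetP[B BP ->].
  have hB := hyp_sub hH (partitionS pP BP).
  have cB : connected B by case/andP: fP => _ /forallP/(_ B)/implyP; apply.
  apply/bigcupP; exists B => //; apply: (subsetP (IH B BP hB)).
  by rewrite comps_conn // ?set11 // (partition_neq0 pP BP).
Qed.


Lemma hpart_disj2 H P B1 B2 : hpartition H P -> B1 \in P -> B2 \in P -> B1 != B2 ->
  [disjoint carrier B1 & carrier B2].
Proof.
by case/andP => _ /forallP/(_ B1)/implyP h b1 b2; move/forallP/(_ B2)/implyP/(_ b2)/implyP: (h b1).
Qed.

Lemma constr_card H K : construction H K -> hypergraph H -> atomic H -> #|K| = #|carrier H|.
Proof.
elim => {H K} [|H x K cH xH cK IH|H P f ncH fP lt cf IH] hH aH.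
- by rewrite cards0 carrier0 cards0.
- set Y := carrier H :\ x in cK IH *.
  have hR := hyp_sub hH (restrict_sub H Y).
  have aR := @atomic_restrict H Y aH.
  have eR : carrier (restrict H Y) = Y.
    apply/eqP; rewrite eqEsubset carrier_restrict; apply/subsetP => y yY.
    have yH : y \in carrier H by move: yY; rewrite inE => /andP[].
    apply/carrierP; exists [set y]; rewrite ?inE //.
    by rewrite aH // sub1set.
  have nK : carrier H \notin K.
    apply/negP => /(subsetP (constr_Conn cK hR)) /Conn_sub; rewrite eR => /subsetP/(_ x xH).
    by rewrite /Y !inE eqxx.
  by rewrite cardsU1 nK IH // eR (cardsD1 x (carrier H)) xH.
- have hP : hpartition H P by case/andP: fP.
  have pP : partition P H by case/andP: hP.
  have hB : forall B, B \in P -> hypergraph B := fun B BP => hyp_sub hH (partitionS pP BP).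
  have aB : forall B, B \in P -> atomic B.
    by move=> B BP; rewrite (hpart_block hH hP BP); apply: atomic_restrict.
  have cfB : forall B, B \in P -> #|f B| = #|carrier B|.
    by move=> B BP; apply: IH => //; [apply: hB | apply: aB].
  rewrite card_bigcup; last first.
  + move=> B BP; rewrite -card_gt0 cfB // card_gt0; exact: block_ne hP BP.
  + move=> B1 B2 b1 b2 ne; have d := hpart_disj2 hP b1 b2 ne.
    rewrite -setI_eq0; apply/eqP/setP => Z; rewrite inE [RHS]inE.
    apply/negbTE/andP => -[z1 z2].
    have s1 := Conn_sub (subsetP (constr_Conn (cf _ b1) (hB _ b1)) _ z1).
    have s2 := Conn_sub (subsetP (constr_Conn (cf _ b2) (hB _ b2)) _ z2).
    have Z0 := Conn_ne (subsetP (constr_Conn (cf _ b1) (hB _ b1)) _ z1).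
    by move/negP: (disj_ne Z0 s1 s2); apply.
  rewrite (eq_bigr (fun B => #|carrier B|)) //.
  rewrite (carrier_cover pP) card_bigcup //.
    by move=> B1 B2 b1 b2 ne; apply: hpart_disj2 hP b1 b2 ne.
  by move=> B BP; exact: block_ne hP BP.
Qed.


Lemma constr_exists n H : #|carrier H| <= n -> hypergraph H ->
  forall oY : option {set T}, (forall Y, oY = Some Y -> Y \in Conn H) ->
  exists K, construction H K /\ (forall Y, oY = Some Y -> Y \in K).
Proof.
have empty : forall H, H = set0 -> forall oY : option {set T},
    (forall Y, oY = Some Y -> Y \in Conn H) ->
    exists K, construction H K /\ (forall Y, oY = Some Y -> Y \in K).
  move=> H0 -> oY hY; exists set0; split; first exact: construction0.
  have h0 : hypergraph (set0 : {set {set T}}) by rewrite /hypergraph inE.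
  have : Conn (set0 : {set {set T}}) == set0 by rewrite Conn_eq0.
  by move=> /eqP e Y /hY; rewrite e inE.
elim: n H => [|n IH] H cH hH oY hY.
  apply: empty => //; apply/eqP; rewrite -carrier_eq0 // -cards_eq0 -leqn0 //.
case: (eqVneq H set0) => [H0|H0]; first exact: empty.
case: (boolP (connected H)) => cn.
  have cC := conn_nonempty_Conn hH cn H0.
  have [x [xH xY]] : exists x, x \in carrier H /\
      (forall Y, oY = Some Y -> Y != carrier H -> x \notin Y).
    case: oY hY => [Y|] hY; last first.
      have : carrier H != set0 by rewrite carrier_eq0.
      by case/set0Pn => x xH; exists x; split.
    case: (eqVneq Y (carrier H)) => [eY|nY].
      have : carrier H != set0 by rewrite carrier_eq0.
      by case/set0Pn => x xH; exists x; split => // Y' [<-]; rewrite eY eqxx.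
    have sY := Conn_sub (hY Y erefl).
    have : ~~ (carrier H \subset Y).
      by apply: contraNN nY => s; rewrite eqEsubset sY s.
    case/subsetPn => x xH xnY; exists x; split => // Y' [<-] _ //.
  set R := restrict H (carrier H :\ x).
  have hR : hypergraph R := hyp_sub hH (restrict_sub _ _).
  have cR : #|carrier R| <= n.
    have := subset_leq_card (carrier_restrict H (carrier H :\ x)).
    move: cH; rewrite (cardsD1 x (carrier H)) xH add1n ltnS => le1 le2.
    exact: leq_trans le2 le1.
  pose oY' := if oY is Some Y then (if Y == carrier H then None else Some Y) else None.
  have hY' : forall Y, oY' = Some Y -> Y \in Conn R.
    move=> Y; rewrite /oY'; case eO: oY => [Y0|] //.
    case: (eqVneq Y0 (carrier H)) => [_|nY]; first by case.
    case=> eY; subst Y0.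
    rewrite /R Conn_restrict inE (hY Y eO) /=; apply/subsetP => y yY.
    rewrite !inE (subsetP (Conn_sub (hY Y eO)) y yY) andbT.
    by apply: contraNneq (xY Y eO nY) => <-.
  case: (IH R cR hR oY' hY') => K [cK KY].
  exists (carrier H |: K); split; first exact: construction1 cK.
  move=> Y eY; case: (eqVneq Y (carrier H)) => [->|nY]; first exact: setU11.
  by apply: setU1r; apply: KY; rewrite /oY' eY (negbTE nY).
set P := Pc H.
have fP := finest_Pc hH.
have hP : hpartition H P by case/andP: fP.
have pP : partition P H by case/andP: hP.
have P0 : P != set0.
  apply: contraNneq H0 => e; rewrite -(cover_partition pP) e /cover big_set0 //.
have lt : 1 < #|P|.
  rewrite ltnNge; apply/negP => le.
  have : #|P| == 1 by rewrite eqn_leq le card_gt0.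
  case/cards1P => B eP.
  have eB : B = H by rewrite -(cover_partition pP) eP cover1.
  have BP : B \in P by rewrite eP inE.
  case/andP: fP => _ /forallP/(_ B)/implyP/(_ BP).
  by rewrite eB (negbTE cn).
have small : forall B, B \in P -> #|carrier B| <= n.
  move=> B BP; rewrite -ltnS; apply: leq_trans cH.
  apply: proper_card; rewrite properE carrierS ?(partitionS pP BP) //=.
  have : #|P :\ B| != 0 by move: lt; rewrite (cardsD1 B P) BP add1n ltnS lt0n.
  rewrite cards_eq0 => /set0Pn[B' /setD1P[ne B'P]].
  apply/negP => s.
  have d := hpart_disj2 hP B'P BP ne.
  have := disj_sub0 d (subset_trans (carrierS (partitionS pP B'P)) s).
  by move/eqP; rewrite (negbTE (block_ne hH hP B'P)).
pose oYB B := if oY is Some Y then (if Y \subset carrier B then Some Y else None) else None.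
have g : forall B, {K | B \in P -> construction B K /\ forall Y, oYB B = Some Y -> Y \in K}.
  move=> B; apply: constructive_indefinite_description.
  case: (boolP (B \in P)) => BP; last by exists set0.
  have hB := hyp_sub hH (partitionS pP BP).
  have hYB : forall Y, oYB B = Some Y -> Y \in Conn B.
    move=> Y; rewrite /oYB; case eO: oY => [Y0|] //.
    case sY: (Y0 \subset carrier B) => // -[eY]; subst Y0.
    by rewrite (hpart_block hH hP BP) Conn_restrict inE (hY Y eO) sY.
  case: (IH B (small B BP) hB (oYB B) hYB) => K [cK KY].
  by exists K => _; split.
exists (\bigcup_(B in P) sval (g B)); split.
  apply: (construction2 cn fP lt) => B BP; exact: (proj1 (svalP (g B) BP)).
move=> Y eY; have YC := hY Y eY.
case: (comps_max YC) => C CC sYC.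
have BP : restrict H C \in P by apply: imset_f.
apply/bigcupP; exists (restrict H C) => //.
apply: (proj2 (svalP (g _) BP)).
rewrite /oYB eY.
by case/compsP: CC => /carrier_restrict_Conn ->; rewrite sYC.
Qed.



Lemma construct_transfer H1 H2 (C : {set {set T}}) : hypergraph H1 -> hypergraph H2 ->
  Conn H1 = Conn H2 -> construct H1 C -> construct H2 C.
Proof.
move=> h1 h2 eC [[K [cK sCK]] hc]; split.
  by exists K; split => //; exact: (constr_transfer cK h1 h2 eC).
move=> P fP B BP.
have cB : carrier B \in comps H1.
  by rewrite (comps_Conn eC) -(finest_comps h2 fP) imset_f.
have := hc _ (finest_Pc h1) _ (comps_restrict h1 (finest_Pc h1) cB).
by case/compsP: cB => /carrier_restrict_Conn ->.
Qed.

Lemma construct_Conn H (C : {set {set T}}) : hypergraph H -> construct H C -> C \subset Conn H.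
Proof.
by move=> hH [[K [cK sCK]] _]; apply: subset_trans sCK (constr_Conn cK hH).
Qed.

Lemma extend_set (U : finType) (K : {set U}) n (A : {set U}) : A \subset K ->
  #|A| + n <= #|K| -> exists C : {set U}, [/\ A \subset C, C \subset K & #|C| = #|A| + n].
Proof.
elim: n A => [|n IH] A sAK le.
  by exists A; rewrite addn0 subxx sAK.
have : ~~ (K \subset A).
  apply/negP => sKA; move: le; rewrite (eqP (_ : A == K)) ?eqEsubset ?sAK //.
  by rewrite addnS ltnNge leq_addr.
case/subsetPn => z zK znA.
have sA' : z |: A \subset K by rewrite subUset sub1set zK.
have : #|z |: A| + n <= #|K| by rewrite cardsU1 znA add1n addSnnS.
case/(IH _ sA') => C [s1 s2 cC]; exists C; split => //.
  exact: subset_trans (subsetUr _ _) s1.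
by rewrite cC cardsU1 znA add1n addSnnS.
Qed.

Lemma construct_exists H Y m : hypergraph H -> atomic H -> Y \in Conn H ->
  #|comps H| < m -> m <= #|carrier H| ->
  exists C : {set {set T}}, [/\ construct H C, Y \in C & #|C| = m].
Proof.
move=> hH aH YC lt le.
case: (@constr_exists #|carrier H| H (leqnn _) hH (Some Y)) => [Y' [<-]//|K [cK KY]].
have YK := KY Y erefl.
have sA : Y |: comps H \subset K by rewrite subUset sub1set YK constr_comps.
have cA : #|Y |: comps H| <= m.
  by apply: leq_trans lt; rewrite cardsU1 -add1n leq_add2r leq_b1.
have cK' : #|K| = #|carrier H| := constr_card cK hH aH.
case: (@extend_set _ K (m - #|Y |: comps H|) _ sA); first by rewrite subnKC // cK'.
move=> C [s1 s2 cC]; exists C; split.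
- split; first by exists K.
  move=> P fP B BP; apply: (subsetP s1); apply: setU1r.
  by rewrite -(finest_comps hH fP) imset_f.
- by apply: (subsetP s1); apply: setU11.
- by rewrite cC subnKC.
Qed.

End S.

Lemma enc_inj (T : finType) : injective (@enc T).
Proof. by apply: imset_inj => x y [->]. Qed.

Lemma encN_inj (T : finType) (A B : {set {set T}}) : None |: enc A = None |: enc B -> A = B.
Proof.
move=> e; apply/setP => X.
have : (Some X \in None |: enc A) = (Some X \in None |: enc B) by rewrite e.
by rewrite !inE /enc !(mem_imset _ _ (@Some_inj _)).
Qed.

Lemma half (T : finType) (H1 H2 : {set {set T}}) (k : nat) :
  hypergraph H1 -> hypergraph H2 -> atomic H1 ->
  (k%:Z <= rankA H1 - 1)%R ->
  (forall F, face_of_rank H1 k%:Z F <-> face_of_rank H2 k%:Z F) ->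
  Conn H1 \subset Conn H2.
Proof.
move=> h1 h2 a1 kr hF; apply/subsetP => Y YC.
rewrite /rankA conn_number_comps // in kr.
have le : (k + #|comps H1| + 1 <= #|carrier H1|)%N.
  by move: kr; rewrite lerBrDr lerBrDr -!PoszD lez_nat addnAC.
have lt1 : (#|comps H1| < #|carrier H1| - k)%N.
  by rewrite ltn_subRL; move: le; rewrite addn1.
have le1 : (#|carrier H1| - k <= #|carrier H1|)%N by exact: leq_subr.
have [C [cC YinC cardC]] := construct_exists h1 a1 YC lt1 le1.
have f1 : face_of_rank H1 k%:Z (enc C).
  right; split => //.
    by apply: le_trans kr _; rewrite /rankA conn_number_comps // gerBl.
  exists C; split => //; rewrite cardC subzn //.
  by apply: leq_trans le; rewrite -addnA leq_addr.
case/hF: f1 => [[/eqP] //|[_ _ [C' [cC' _ e]]]].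
move/enc_inj: e => e; subst C'.
exact: (subsetP (construct_Conn h2 cC')).
Qed.

Unset Implicit Arguments.

Theorem proposition5p3 (T : finType) (H1 H2 : {set {set T}}) (k : int) :
  hypergraph H1 -> hypergraph H2 -> atomic H1 -> atomic H2 ->
  (-1 <= k)%R -> (k <= Num.min (rankA H1) (rankA H2) - 1)%R ->
  (forall F, face_of_rank H1 k F <-> face_of_rank H2 k F) ->
  forall F, inA H1 F <-> inA H2 F.
Proof.
move=> h1 h2 a1 a2 km kM hF.
suff eC : Conn H1 = Conn H2.
  move=> F; split.
    case=> [[C [cC ->]]|[G [sG ->]]].
      by left; exists C; split => //; apply: (construct_transfer h1 h2 eC).
    right; exists G; split => //; apply/(sat_closureP _ h2).
    by rewrite -eC; apply/(sat_closureP _ h1).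
  case=> [[C [cC ->]]|[G [sG ->]]].
    by left; exists C; split => //; apply: (construct_transfer h2 h1 (esym eC)).
  right; exists G; split => //; apply/(sat_closureP _ h1).
  by rewrite eC; apply/(sat_closureP _ h2).
move: kM; rewrite lerBrDr le_min -!lerBrDr => /andP[k1 k2].
case: k km k1 k2 hF => [n|n] km k1 k2 hF.
  apply/eqP; rewrite eqEsubset (half h1 h2 a1 k1 hF) /=.
  apply: (half h2 h1 a2 k2) => F; split => /hF //.
have n0 : n = 0%N.
  by move: km; rewrite NegzE lerN2 lez_nat ltnS leqn0 => /eqP.
subst n.
have f1 : face_of_rank H1 (Negz 0) (None |: enc (Conn H1)).
  left; split => //; exists (Conn H1); split => //; exact/(sat_closureP _ h1).
case/hF: f1 => [[_ [G [sG e]]]|[//]].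
move/(sat_closureP _ h2): sG => eG.
by rewrite -eG; apply: encN_inj.
Qed.
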